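(* Let $G$, $k\ge 3$, the choice strings $c_{i,j}$, $L=k+1$ and $d=k-2$ be as in the construction in the context, and let $s$ be a string of length $L$ such that every choice string $c_{i,j}$ ($1\le i<j\le k$) has a substring of length $L$ at Hamming distance at most $d$ from $s$. Then $s$ contains at least two encoding symbols and at least one occurrence of the synchronizing symbol $\#$.
   Context: Let $G=(V,E)$ be an undirected simple graph with $V=\{v_1,\dots,v_n\}$ and edge set $E=\{e_1,\dots,e_m\}$, and let $k\ge 3$ be an integer; put $N=\binom{k}{2}$. The alphabet consists of pairwise distinct symbols: encoding symbols $\sigma_1,\dots,\sigma_n$, string identification symbols $\varphi_1,\dots,\varphi_N$, and a synchronizing symbol $\#$. Order the pairs $(i,j)$ with $1\le i<j\le k$ lexicographically, $(1,2),(1,3),\dots,(1,k),(2,3),\dots,(k-1,k)$, and let $i'$ denote the position of $(i,j)$ in this order. For an edge $e$ joining $v_r$ and $v_s$ with $r<s$ define $\mathrm{block}(i,j,e)=\varphi_{i'}^{\,i-1}\,\sigma_r\,\varphi_{i'}^{\,j-i-1}\,\sigma_s\,\varphi_{i'}^{\,k-j}\,\#$ (a string of length $k+1$), and the choice string $c_{i,j}=\mathrm{block}(i,j,e_1)\,\varphi_{i'}^{\,k}\,\mathrm{block}(i,j,e_2)\,\varphi_{i'}^{\,k}\cdots\varphi_{i'}^{\,k}\,\mathrm{block}(i,j,e_m)$. Set $L=k+1$ and $d=k-2$. *)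

(* Defs.v *)
From HB Require Import structures.
From mathcomp Require Import all_boot.
Set Implicit Arguments. Unset Strict Implicit. Unset Printing Implicit Defensive.

(* The alphabet: encoding symbols sigma_r, string identification symbols
   phi_p, and the synchronizing symbol #.  Pairwise distinct by construction. *)
Inductive symbol : Type :=
| Enc of nat
| Phi of nat
| Hash.

Definition symbol_eqb (a b : symbol) : bool :=
  match a, b with
  | Enc x, Enc y => x == y
  | Phi x, Phi y => x == y
  | Hash, Hash => true
  | _, _ => false
  end.

Lemma symbol_eqP : Equality.axiom symbol_eqb.
Proof.
case=> [x|x|] [y|y|] /=; try by constructor.
- by apply: (iffP eqP) => [->|[]].
- by apply: (iffP eqP) => [->|[]].
Qed.

HB.instance Definition _ := hasDecEq.Build symbol symbol_eqP.

Definition is_enc (a : symbol) : bool := if a is Enc _ then true else false.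

Definition in_alphabet (n k : nat) (a : symbol) : bool :=
  match a with
  | Enc r => (1 <= r <= n)
  | Phi p => (1 <= p <= 'C(k, 2))
  | Hash => true
  end.

Definition pairs (k : nat) : seq (nat * nat) :=
  [seq (i, j) | i <- iota 1 k, j <- iota i.+1 (k - i)].

(* i' : the (1-based) position of (i,j) in the above order. *)
Definition pair_pos (k i j : nat) : nat := (index (i, j) (pairs k)).+1.

(* block(i,j,e) for the edge e = {v_r, v_s}, r < s, given as the pair (r,s). *)
Definition block (k i j : nat) (e : nat * nat) : seq symbol :=
  let p := pair_pos k i j in
  nseq (i - 1) (Phi p) ++ [:: Enc e.1] ++ nseq (j - i - 1) (Phi p)
    ++ [:: Enc e.2] ++ nseq (k - j) (Phi p) ++ [:: Hash].

Fixpoint join_sep (sep : seq symbol) (l : seq (seq symbol)) : seq symbol :=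
  match l with
  | [::] => [::]
  | [:: x] => x
  | x :: l' => x ++ sep ++ join_sep sep l'
  end.

Definition choice_string (k : nat) (es : seq (nat * nat)) (i j : nat)
  : seq symbol :=
  join_sep (nseq k (Phi (pair_pos k i j))) [seq block k i j e | e <- es].

(* Hamming distance of two strings (used on strings of equal length). *)
Definition hamming (s t : seq symbol) : nat :=
  count (fun ab : symbol * symbol => ab.1 != ab.2) (zip s t).

Definition has_close_substring (L d : nat) (c s : seq symbol) : Prop :=
  exists p, p + L <= size c /\ hamming (take L (drop p c)) s <= d.

(* es encodes the edge set of a simple graph on v_1..v_n: each edge {v_r,v_s}
   is listed once as (r,s) with 1 <= r < s <= n. *)
Definition simple_edge_list (n : nat) (es : seq (nat * nat)) : Prop :=
  uniq es /\ all (fun e : nat * nat => (1 <= e.1) && (e.1 < e.2) && (e.2 <= n)) es.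

(* Main.v *)
Require Import Defs.
From mathcomp Require Import all_boot zify.

Lemma nthC (x0 a : symbol) s m : nth x0 (a :: s) m = if m == 0 then a else nth x0 s m.-1.
Proof. by case: m. Qed.

Lemma block_nth k i j e q x0 : 1 <= i -> i < j -> j <= k -> q < k.+1 ->
  let a := nth x0 (block k i j e) q in
  (is_enc a -> q = i - 1 \/ q = j - 1) /\ (a == Hash -> q = k).
Proof.
move=> Hi Hij Hj Hq; rewrite /block /=.
rewrite !(nth_cat, nthC, size_nseq, nth_nseq).
repeat case: ifP.
all: move=> *; split=> //; try lia.
Qed.

Lemma size_block k i j e : 1 <= i -> i < j -> j <= k -> size (block k i j e) = k.+1.
Proof. move=> *; rewrite /block !size_cat !size_nseq /=. lia. Qed.

Lemma choice_nth k i j es q x0 : 1 <= i -> i < j -> j <= k ->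
  q < size (choice_string k es i j) ->
  let a := nth x0 (choice_string k es i j) q in
  (is_enc a -> q %% (k.+1 + k) = i - 1 \/ q %% (k.+1 + k) = j - 1) /\
  (a == Hash -> q %% (k.+1 + k) = k).
Proof.
move=> Hi Hij Hj; elim: es q => [|e es IH] q //.
case: es IH => [|e2 es] IH.
  rewrite /choice_string /= => Hq.
  rewrite size_block // in Hq.
  rewrite modn_small; last by lia.
  exact: block_nth.
have -> : choice_string k [:: e, e2 & es] i j =
   block k i j e ++ nseq k (Phi (pair_pos k i j)) ++ choice_string k (e2 :: es) i j by [].
rewrite size_cat size_block // size_cat size_nseq => Hq.
rewrite nth_cat size_block //.
case: ifP => H1.
  rewrite modn_small; last by lia.
  exact: block_nth.
rewrite nth_cat size_nseq nth_nseq.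
case: ifP => H2; first by rewrite H2.
have Hq' : q - k.+1 - k < size (choice_string k (e2 :: es) i j) by lia.
have E : q = (q - k.+1 - k) + (k.+1 + k) by lia.
have := IH _ Hq'. by rewrite [in q %% _]E modnDr.
Qed.

Lemma choice_all k i j es :
  all (fun a => is_enc a || (a == Hash) || (a == Phi (pair_pos k i j))) (choice_string k es i j).
Proof.
have Hb : forall e, all (fun a => is_enc a || (a == Hash) || (a == Phi (pair_pos k i j))) (block k i j e).
  move=> e; rewrite /block /=; do 6 rewrite ?(all_cat, all_nseq) /= ?eqxx /= ?orbT /=.
  by [].
have Hs : all (fun a => is_enc a || (a == Hash) || (a == Phi (pair_pos k i j))) (nseq k (Phi (pair_pos k i j))).
  by rewrite all_nseq eqxx !orbT.
elim: es => [|e es IH] //.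
case: es IH => [|e2 es] IH; first exact: Hb.
have -> : choice_string k [:: e, e2 & es] i j =
   block k i j e ++ nseq k (Phi (pair_pos k i j)) ++ choice_string k (e2 :: es) i j by [].
by rewrite all_cat Hb all_cat Hs IH.
Qed.

Lemma window_eq (c : seq symbol) p n x0 : p + n <= size c ->
  take n (drop p c) = [seq nth x0 c (p + x) | x <- iota 0 n].
Proof.
move=> H; apply: (@eq_from_nth _ x0).
  by rewrite size_take size_drop size_map size_iota; apply/minn_idPl; lia.
move=> x; rewrite size_takel ?size_drop; last by lia.
move=> Hxn.
by rewrite nth_take // nth_drop (nth_map 0) ?size_iota // nth_iota.
Qed.

Lemma count_le_in (T : eqType) (a b : pred T) (s : seq T) :
  (forall x, x \in s -> a x -> b x) -> count a s <= count b s.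
Proof.
elim: s => [|y s IH] H //=.
have H' : forall x, x \in s -> a x -> b x by move=> x xs; apply: H; rewrite inE xs orbT.
have := IH H'. have := H y (mem_head _ _).
case: (a y); case: (b y) => /=; try lia.
Qed.

Lemma count_mod1 p P n r : n <= P -> count (fun x => (p + x) %% P == r) (iota 0 n) <= 1.
Proof.
move=> HnP.
have -> : count (fun x => (p + x) %% P == r) (iota 0 n) =
  count (pred1 r) [seq (p + x) %% P | x <- iota 0 n] by rewrite count_map.
rewrite count_uniq_mem; first by case: (_ \in _).
rewrite map_inj_in_uniq ?iota_uniq //.
move=> x y; rewrite !mem_iota /= !add0n => Hx Hy /eqP.
rewrite eqn_modDl !modn_small; [by move/eqP| lia | lia].
Qed.

Lemma window_counts k i j es p : 1 <= i -> i < j -> j <= k ->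
  p + k.+1 <= size (choice_string k es i j) ->
  count is_enc (take k.+1 (drop p (choice_string k es i j))) <= 2 /\
  count (pred1 Hash) (take k.+1 (drop p (choice_string k es i j))) <= 1.
Proof.
move=> Hi Hij Hj H.
rewrite (window_eq _ _ _ Hash H) !count_map.
have Hin : forall x, x \in iota 0 k.+1 -> p + x < size (choice_string k es i j).
  by move=> x; rewrite mem_iota => /andP [_ ?]; lia.
split.
  apply: leq_trans (count_le_in _ _ (predU (fun x => (p + x) %% (k.+1 + k) == i - 1)
                                      (fun x => (p + x) %% (k.+1 + k) == j - 1)) _ _) _.
    move=> x /Hin Hx /=.
    case: (choice_nth _ _ _ _ _ Hash Hi Hij Hj Hx) => + _ => /[apply] -[->|->]; rewrite eqxx ?orbT //.
  have := count_predUI (fun x => (p + x) %% (k.+1 + k) == i - 1)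
                       (fun x => (p + x) %% (k.+1 + k) == j - 1) (iota 0 k.+1).
  have := count_mod1 p (k.+1 + k) k.+1 (i - 1) (leq_addr _ _).
  have := count_mod1 p (k.+1 + k) k.+1 (j - 1) (leq_addr _ _).
  rewrite /=. lia.
apply: leq_trans (@count_le_in nat _ (fun x : nat => (p + x) %% (k.+1 + k) == k) _ _) _.
  move=> x /Hin Hx /=.
  by case: (choice_nth _ _ _ _ _ Hash Hi Hij Hj Hx) => _ /[apply] ->.
exact: count_mod1 (leq_addr _ _).
Qed.

Lemma zip_l (P Q : pred symbol) (w s : seq symbol) :
  count (fun ab : symbol * symbol => P ab.1 && Q ab.2) (zip w s) <= minn (count P w) (count Q s).
Proof.
elim: w s => [|a w IH] [|b s] //=; try by rewrite ?minn0 ?min0n.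
have := IH s. case: (P a); case: (Q b) => /=; lia.
Qed.

Lemma agree_le (t : symbol) (w s : seq symbol) :
  all (fun a => is_enc a || (a == Hash) || (a == t)) w ->
  count (fun ab : symbol * symbol => ab.1 == ab.2) (zip w s) <=
  count (fun ab : symbol * symbol => is_enc ab.1 && is_enc ab.2) (zip w s) +
  count (fun ab : symbol * symbol => (ab.1 == Hash) && (ab.2 == Hash)) (zip w s) +
  count (fun ab : symbol * symbol => true && (ab.2 == t)) (zip w s).
Proof.
elim: w s => [|a w IH] [|b s] //= /andP [Ha Hw].
have := IH s Hw.
case: (eqVneq a b) => [<-|_] /=; last lia.
move: Ha; case: a => [x|x|] /=; rewrite ?eqxx /=; try lia.
Qed.

Definition isH (a : symbol) : bool := a == Hash.
Definition isP (a : symbol) : bool := if a is Phi _ then true else false.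

Lemma pair_bound k es s i j : 1 <= i -> i < j -> j <= k -> size s = k.+1 ->
  has_close_substring k.+1 (k - 2) (choice_string k es i j) s ->
  3 <= minn (count is_enc s) 2 + minn (count isH s) 1
       + count (fun a => a == Phi (pair_pos k i j)) s.
Proof.
move=> Hi Hij Hj Hs [p [Hp Hh]].
have [Ew Hw] := window_counts _ _ _ _ _ Hi Hij Hj Hp.
set w := take k.+1 (drop p (choice_string k es i j)) in Ew Hw Hh *.
have Sw : size w = k.+1 by rewrite size_takel // size_drop; lia.
have Aw : all (fun a => is_enc a || (a == Hash) || (a == Phi (pair_pos k i j))) w.
  apply/allP => a /mem_take /mem_drop.
  by move/allP: (choice_all k i j es); apply.
have C := count_predC (fun ab : symbol * symbol => ab.1 == ab.2) (zip w s).
rewrite size_zip Sw Hs minnn in C.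
have Hh' : count (predC (fun ab : symbol * symbol => ab.1 == ab.2)) (zip w s) <= k - 2 by [].
have Ag := agree_le _ _ s Aw.
have Z1 := zip_l is_enc is_enc w s.
have Z2 := zip_l (fun a => a == Hash) (fun a => a == Hash) w s.
have Z3 := zip_l (fun _ => true) (fun a => a == Phi (pair_pos k i j)) w s.

have Hw' : count (fun a => a == Hash) w <= 1 by [].
have G1 : 3 <= count (fun ab : symbol * symbol => ab.1 == ab.2) (zip w s) by lia.
have G3 : count (fun ab : symbol * symbol => is_enc ab.1 && is_enc ab.2) (zip w s) <= minn (count is_enc s) 2.
  rewrite leq_min; apply/andP; split.
    by apply: (leq_trans Z1); apply: (leq_trans (geq_minr _ _)).
  by apply: (leq_trans Z1); apply: (leq_trans (geq_minl _ _)).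
have G4 : count (fun ab : symbol * symbol => (ab.1 == Hash) && (ab.2 == Hash)) (zip w s) <= minn (count isH s) 1.
  rewrite leq_min; apply/andP; split.
    by apply: (leq_trans Z2); apply: (leq_trans (geq_minr _ _)).
  by apply: (leq_trans Z2); apply: (leq_trans (geq_minl _ _)).
have G5 : count (fun ab : symbol * symbol => true && (ab.2 == Phi (pair_pos k i j))) (zip w s) <= count (fun a => a == Phi (pair_pos k i j)) s.
  by apply: (leq_trans Z3); apply: (leq_trans (geq_minr _ _)).
clear -G1 G3 G4 G5 Ag.
lia.
Qed.

Lemma mem_pairs k i j : 1 <= i -> i < j -> j <= k -> (i, j) \in pairs k.
Proof.
move=> Hi Hij Hj; apply/allpairsPdep; exists i, j; split => //.
  rewrite mem_iota; lia.
rewrite mem_iota; lia.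
Qed.


Lemma count3 (s : seq symbol) :
  count is_enc s + count isH s + count isP s = size s.
Proof.
elim: s => [|a s IH] //=.
have -> : size s = count is_enc s + count isH s + count isP s by [].
by case: a => [x|x|]; rewrite /isH /isP /=; rewrite ?addn0 ?add0n ?addnS ?addSn ?addn1 ?add1n ?addnA.
Qed.

Lemma sum_uniq (V s : seq symbol) c : uniq V ->
  (forall v, v \in V -> c <= count (fun a => a == v) s) ->
  size V * c <= count (fun a => a \in V) s.
Proof.
elim: V => [|v V IH] //= /andP [vV uV] H.
have H1 := H v (mem_head _ _).
have H2 : size V * c <= count (fun a => a \in V) s.
  by apply: IH => // u uV'; apply: H; rewrite inE uV' orbT.
have E : count (fun a => a \in v :: V) s = count (fun a => a == v) s + count (fun a => a \in V) s.
  rewrite -(count_predUI (fun a => a == v) (fun a => a \in V)).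
  have -> : count (predI (fun a => a == v) (fun a => a \in V)) s = 0.
    apply/eqP; rewrite -leqn0 -(count_pred0 s); apply: count_le_in.
    by move=> a _ /= /andP [/eqP -> ]; rewrite (negbTE vV).
  by rewrite addn0; apply: eq_count => a; rewrite inE.
rewrite E mulSn; exact: leq_add H1 H2.
Qed.

Theorem lemma1 (n k : nat) (es : seq (nat * nat)) (s : seq symbol) :
  simple_edge_list n es ->
  3 <= k ->
  all (in_alphabet n k) s ->
  size s = k.+1 ->
  (forall i j, 1 <= i -> i < j -> j <= k ->
     has_close_substring k.+1 (k - 2) (choice_string k es i j) s) ->
  2 <= count is_enc s /\ Hash \in s.
Proof.
move=> _ Hk _ Hs Hc.
pose Ps := (2, 3) :: [seq (1, j) | j <- iota 2 (k - 1)].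
have HPs : forall x, x \in Ps -> [/\ 1 <= x.1, x.1 < x.2 & x.2 <= k].
  move=> x; rewrite inE => /orP [/eqP -> /=|/mapP [j]]; first by split => //; lia.
  by rewrite mem_iota => /andP [? ?] -> /=; split => //; lia.
have uPs : uniq Ps.
  rewrite /= map_inj_uniq ?iota_uniq ?andbT; last by move=> x y [].
  by apply/mapP => [[j _ []]].
pose V := [seq Phi (pair_pos k x.1 x.2) | x <- Ps].
have uV : uniq V.
  rewrite map_inj_in_uniq // => x y xP yP []; rewrite /pair_pos => E.
  have [? ? ?] := HPs x xP. have [? ? ?] := HPs y yP.
  have mx := mem_pairs k x.1 x.2 ltac:(done) ltac:(done) ltac:(done).
  have my := mem_pairs k y.1 y.2 ltac:(done) ltac:(done) ltac:(done).
  move: (nth_index (0, 0) mx) (nth_index (0, 0) my).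
  move=> Ex Ey; rewrite [x]surjective_pairing [y]surjective_pairing -Ex -Ey E //.
have sV : size V = k by rewrite size_map /= size_map size_iota; lia.
set E := count is_enc s. set H := count isH s. set F := count isP s.
have Hv : forall v, v \in V -> 3 - (minn E 2 + minn H 1) <= count (fun a => a == v) s.
  move=> v /mapP [x xP ->]. have [h1 h2 h3] := HPs x xP.
  have := pair_bound k es s x.1 x.2 h1 h2 h3 Hs (Hc _ _ h1 h2 h3).
  rewrite -/E -/H. by rewrite leq_subLR.
have S1 := sum_uniq V s (3 - (minn E 2 + minn H 1)) uV Hv.
have S2 : count (fun a => a \in V) s <= F.
  apply: count_le_in => a _ /mapP [x _ ->]; done.
have S3 := count3 s. rewrite -/E -/H -/F Hs in S3.
rewrite sV in S1.
have HH : (Hash \in s) = (0 < H) by rewrite -has_pred1 has_count.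
rewrite HH.
have S4 : k * (3 - (minn E 2 + minn H 1)) <= F by apply: leq_trans S1 S2.
clear -S4 S3 Hk.
nia.
Qed.
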